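(* Let $\rho$ be a normal ruling of a front of a Legendrian link $\Lambda$. For any choice of orientations of $\Lambda$ and of $\Lambda^\rho$, \[ \mathrm{rlk}_2(\rho)\equiv \tfrac12\big(tb(\Lambda)+\chi(\rho)+2e_2(\rho)\big) \pmod 2, \] where $2e_2(\rho)$ is understood as $2(s_-(\rho)+f_+-f_-)$ computed from these orientations.
   Context: Normal ruling: fix a front diagram of $\Lambda$ whose crossings and cusps have distinct $x$-coordinates. A normal ruling $\rho$ is a set of crossings (switches) such that, letting $\Lambda^\rho$ be the front obtained by resolving each switch into two horizontal non-crossing segments: (i) each component of $\Lambda^\rho$ is planar isotopic to the standard front of the maximal-$tb$ Legendrian unknot; (ii) exactly two components of $\Lambda^\rho$ are incident to each switch; (iii) in a small vertical strip around each switch, the two incident ruling disks are either nested or disjoint. $\chi(\rho)=c(\Lambda)-s(\rho)$ with $c(\Lambda)$ the number of right cusps and $s(\rho)$ the number of switches. Given orientations $o$ of $\Lambda$ and $o^\rho$ of $\Lambda^\rho$: $s_-(\rho)$ is the number of negative switches (w.r.t. $o$); a crossing of $\Lambda^\rho$ is flipped if its signs w.r.t. $o$ and $o^\rho$ differ; $f_\pm$ is the number of flipped crossings that are positive/negative w.r.t. $o^\rho$. The unoriented resolution linking number $\mathrm{rlk}_2(\rho)$ is the mod $2$ reduction of the sum of the pairwise linking numbers of the components of $\Lambda^\rho$, with any chosen orientation of the components. *)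

(* Defs.v *)
From Stdlib Require Import Relations ClassicalDescription.
From mathcomp Require Import all_boot all_order all_algebra.
From mathcomp Require Import intdiv.
Set Implicit Arguments. Unset Strict Implicit. Unset Printing Implicit Defensive.
Import Order.TTheory GRing.Theory Num.Theory.

(* Combinatorial model of a generic front diagram whose crossings and cusps  *)
(* have distinct x-coordinates: the sequence, from left to right, of its     *)
(* elementary events.  Between events the front consists of [width F t]      *)
(* horizontal strands, numbered 0,1,... from bottom to top ("slice" t is the *)
(* vertical line just after the first t events).                            *)
(*   LC k : a left cusp, creating two new strands at positions k, k+1;       *)
(*   RC k : a right cusp, where the strands at positions k, k+1 meet;        *)
(*   X k  : a crossing of the strands at positions k and k+1.               *)
Inductive event := LC of nat | RC of nat | X of nat.

Definition front := seq event.

Definition ev (F : front) (t : nat) : event := nth (X 0) F t.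

Definition step (n : nat) (e : event) : nat :=
  match e with LC _ => n.+2 | RC _ => n.-2 | X _ => n end.

Definition width (F : front) (t : nat) : nat := foldl step 0 (take t F).

Definition valid_front (F : front) : Prop :=
  (forall t, t < size F ->
     match ev F t with
     | LC k => k <= width F t
     | RC k => k.+1 < width F t
     | X k => k.+1 < width F t
     end) /\ width F (size F) = 0.

(* A point (t, p): the strand at position p of slice t. *)
Definition point := (nat * nat)%type.

(* Where the strand at position p of slice t continues in slice t+1, after
   resolving the crossings in the set S of switches (S = pred0 : the front of
   Lambda itself; S = rho : the resolved front Lambda^rho). *)
Definition next_pos (F : front) (S : pred nat) (t p : nat) : option nat :=
  match ev F t with
  | LC k => Some (if p < k then p else p.+2)
  | RC k => if p < k then Some p else if p < k.+2 then None else Some (p - 2)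
  | X k => if S t then Some p
           else Some (if p == k then k.+1 else if p == k.+1 then k else p)
  end.

Definition sedge (F : front) (S : pred nat) (P Q : point) : Prop :=
  [/\ P.1 < size F, P.2 < width F P.1, Q.1 = P.1.+1
    & next_pos F S P.1 P.2 = Some Q.2].

Definition cedge (F : front) (P Q : point) : Prop :=
  exists t k, t < size F /\
   ((ev F t = LC k /\ P = (t.+1, k) /\ Q = (t.+1, k.+1)) \/
    (ev F t = RC k /\ P = (t, k) /\ Q = (t, k.+1))).

Definition connected (F : front) (S : pred nat) : relation point :=
  clos_refl_sym_trans point (fun P Q => sedge F S P Q \/ cedge F P Q).

(* An orientation: d P = true iff the strand through P is oriented from left
   to right.  The direction is preserved along strands and reversed at cusps. *)
Definition is_orientation (F : front) (S : pred nat) (d : point -> bool) : Prop :=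
  (forall P Q, sedge F S P Q -> d P = d Q) /\
  (forall P Q, cedge F P Q -> d P <> d Q).

(* Sign of the crossing between the strands at positions k, k+1 at event t:
   in a front, a crossing is positive iff both strands point in the same
   x-direction. *)
Definition xsign (d : point -> bool) (t k : nat) : int :=
  if d (t, k) == d (t, k.+1) then 1%R else (-1)%R.

Definition is_crossing (F : front) (t : nat) : bool :=
  if ev F t is X _ then true else false.

Definition xpos (F : front) (t : nat) : nat :=
  match ev F t with LC k | RC k | X k => k end.

Definition is_lcusp (F : front) (t : nat) : bool :=
  if ev F t is LC _ then true else false.
Definition is_rcusp (F : front) (t : nat) : bool :=
  if ev F t is RC _ then true else false.

Definition pb (P : Prop) : bool :=
  if excluded_middle_informative P then true else false.

Definition nested_or_disjoint (x1 y1 x2 y2 : nat) : bool :=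
  [|| y1 < x2, y2 < x1, (x1 <= x2) && (y2 <= y1) | (x2 <= x1) && (y1 <= y2)].

Definition normal_ruling (F : front) (rho : pred nat) : Prop :=
  (forall t, rho t -> t < size F /\ is_crossing F t) /\
  (* (i) every component of Lambda^rho is a standard max-tb unknot front:
     exactly one left cusp, exactly one right cusp, no self-crossing *)
  (forall P : point, P.1 <= size F -> P.2 < width F P.1 ->
     (exists! t, t < size F /\ is_lcusp F t /\
                 connected F rho P (t.+1, xpos F t)) /\
     (exists! t, t < size F /\ is_rcusp F t /\
                 connected F rho P (t, xpos F t))) /\
  (forall t, t < size F -> is_crossing F t -> ~~ rho t ->
     ~ connected F rho (t, xpos F t) (t, (xpos F t).+1)) /\
  (* (ii) exactly two components of Lambda^rho are incident to each switch *)
  (forall t, rho t -> ~ connected F rho (t, xpos F t) (t, (xpos F t).+1)) /\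
  (* (iii) near each switch, the two ruling disks are nested or disjoint;
     a (resp. b) is the position of the other strand of the component of the
     strand at position k (resp. k+1) at the switch *)
  (forall t a b, rho t ->
     let k := xpos F t in
     a < width F t -> b < width F t -> a != k -> b != k.+1 ->
     connected F rho (t, k) (t, a) -> connected F rho (t, k.+1) (t, b) ->
     nested_or_disjoint (minn k a) (maxn k a) (minn k.+1 b) (maxn k.+1 b)).

Local Open Scope ring_scope.

Definition writhe (F : front) (d : point -> bool) : int :=
  \sum_(t < size F | is_crossing F t) xsign d t (xpos F t).

Definition ncusps (F : front) : nat := \sum_(t < size F | is_rcusp F t) 1%N.

Definition tb (F : front) (d : point -> bool) : int :=
  writhe F d - (ncusps F)%:Z.

Definition nswitches (F : front) (rho : pred nat) : nat :=
  \sum_(t < size F | rho t) 1%N.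

Definition chi (F : front) (rho : pred nat) : int :=
  (ncusps F)%:Z - (nswitches F rho)%:Z.

Definition nswitches_neg (F : front) (rho : pred nat) (o : point -> bool) : nat :=
  \sum_(t < size F | rho t && (xsign o t (xpos F t) == -1)) 1%N.

Definition flipped (F : front) (rho : pred nat) (o orho : point -> bool) (t : nat) : bool :=
  [&& is_crossing F t, ~~ rho t & xsign o t (xpos F t) != xsign orho t (xpos F t)].

Definition fplus (F : front) (rho : pred nat) (o orho : point -> bool) : nat :=
  \sum_(t < size F | flipped F rho o orho t && (xsign orho t (xpos F t) == 1)) 1%N.

Definition fminus (F : front) (rho : pred nat) (o orho : point -> bool) : nat :=
  \sum_(t < size F | flipped F rho o orho t && (xsign orho t (xpos F t) == -1)) 1%N.

(* e_2(rho) := s_-(rho) + f_+ - f_- ; the paper writes 2 e_2 for 2 times this *)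
Definition e2 (F : front) (rho : pred nat) (o orho : point -> bool) : int :=
  (nswitches_neg F rho o)%:Z + (fplus F rho o orho)%:Z - (fminus F rho o orho)%:Z.

(* Components of Lambda^rho are indexed by their (unique) left cusp: the
   component of left cusp i contains the point (i+1, xpos F i). *)
Definition lcusp_pt (F : front) (i : nat) : point := (i.+1, xpos F i).

Definition crossing_between (F : front) (rho : pred nat) (i j t : nat) : bool :=
  [&& is_crossing F t, ~~ rho t &
   pb ((connected F rho (t, xpos F t) (lcusp_pt F i) /\
        connected F rho (t, (xpos F t).+1) (lcusp_pt F j)) \/
       (connected F rho (t, xpos F t) (lcusp_pt F j) /\
        connected F rho (t, (xpos F t).+1) (lcusp_pt F i)))].

Definition lk (F : front) (rho : pred nat) (orho : point -> bool) (i j : nat) : int :=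
  ((\sum_(t < size F | crossing_between F rho i j t) xsign orho t (xpos F t)) %/ 2)%Z.

Definition rlk (F : front) (rho : pred nat) (orho : point -> bool) : int :=
  \sum_(i < size F | is_lcusp F i)
    \sum_(j < size F | is_lcusp F j && (i < j)%N) lk F rho orho i j.

(* Main.v *)
Require Import Defs.
From Stdlib Require Import Relations ClassicalDescription.
From mathcomp Require Import all_boot all_order all_algebra.
From mathcomp Require Import intdiv zify ring.
Set Implicit Arguments. Unset Strict Implicit. Unset Printing Implicit Defensive.
Import Order.TTheory GRing.Theory Num.Theory.


Fixpoint invc (s : seq (bool * bool)) : nat :=
  if s is x :: s' then x.1 * count snd s' + invc s' else 0.

Lemma invcD A B : invc (A ++ B) = invc A + invc B + count fst A * count snd B.
Proof.
elim: A => [|x A IH] /=; first by rewrite mul0n addn0.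
rewrite IH count_cat. case: x => [[] []] /=; lia.
Qed.

Lemma invc_swap A B x y :
  invc (A ++ [:: y; x] ++ B) + (x.1 && y.2) = invc (A ++ [:: x; y] ++ B) + (y.1 && x.2).
Proof.
rewrite !invcD /=.
case: x => [[] []]; case: y => [[] []] /=; lia.
Qed.

Lemma invc_ins A B x : ~~ (x.1 && x.2) ->
  odd (invc (A ++ [:: x; x] ++ B)) = odd (invc (A ++ B)).
Proof.
rewrite !invcD /=.
case: x => [[] []] //= _; rewrite !oddD !oddM /=;
  by case: (odd _); case: (odd _); case: (odd _); case: (odd _).
Qed.



Lemma widthS F t : t < size F -> width F t.+1 = step (width F t) (ev F t).
Proof. by move=> h; rewrite /width (take_nth (X 0)) // foldl_rcons. Qed.

Lemma width0 F : width F 0 = 0.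
Proof. by rewrite /width take0. Qed.

Lemma pbP (P : Prop) : reflect P (pb P).
Proof. by rewrite /pb; case: excluded_middle_informative => h; constructor. Qed.

Lemma pb_eq (P Q : Prop) : (P <-> Q) -> pb P = pb Q.
Proof. by move=> [h1 h2]; apply/pbP/pbP. Qed.

Lemma pb_orand (A B C D : Prop) :
  pb ((A /\ B) \/ (C /\ D)) = (pb A && pb B) || (pb C && pb D).
Proof.
apply/pbP/orP.
- by case=> [[/pbP -> /pbP ->]|[/pbP -> /pbP ->]]; [left|right].
- by case=> /andP[/pbP ? /pbP ?]; [left|right].
Qed.

Section Fr.
Variables (F : front) (rho : pred nat).

Lemma conn_sym P Q : connected F rho P Q -> connected F rho Q P.
Proof. exact: rst_sym. Qed.
Lemma conn_trans P Q R : connected F rho P Q -> connected F rho Q R -> connected F rho P R.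
Proof. exact: rst_trans. Qed.

Lemma conn_step t p q : t < size F -> p < width F t -> next_pos F rho t p = Some q ->
  connected F rho (t, p) (t.+1, q).
Proof. by move=> h1 h2 h3; apply: rst_step; left; split. Qed.

Variables (i j : nat).

Definition lab (P : point) : bool * bool :=
  (pb (connected F rho P (lcusp_pt F i)), pb (connected F rho P (lcusp_pt F j))).

Lemma lab_conn P Q : connected F rho P Q -> lab P = lab Q.
Proof.
move=> h; rewrite /lab; congr pair; apply: pb_eq; split => h';
 by [apply: conn_trans h'; apply: conn_sym | apply: conn_trans h'].
Qed.

Lemma lab_step t p q : t < size F -> p < width F t -> next_pos F rho t p = Some q ->
  lab (t.+1, q) = lab (t, p).
Proof. by move=> h1 h2 h3; symmetry; apply: lab_conn; apply: conn_step. Qed.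

Definition Lsq t := map (fun p => lab (t, p)) (iota 0 (width F t)).

Lemma map_iota_shift (f g : nat -> bool * bool) d m n :
  (forall p, m <= p < m + n -> f (d + p) = g p) ->
  map f (iota (d + m) n) = map g (iota m n).
Proof.
move=> h; rewrite iotaDl -map_comp; apply/eq_in_map => p; rewrite mem_iota.
exact: h.
Qed.

End Fr.



Section P3.
Variables (F : front) (rho : pred nat).
Hypothesis vf : valid_front F.
Hypothesis nr : normal_ruling F rho.

Lemma comp_ex P : P.1 <= size F -> P.2 < width F P.1 ->
  exists i0, [/\ i0 < size F, is_lcusp F i0, connected F rho P (lcusp_pt F i0) &
   forall i', i' < size F -> is_lcusp F i' -> connected F rho P (lcusp_pt F i') -> i' = i0].
Proof.
move=> h1 h2; case: (nr.2.1 P h1 h2) => [[i0 [[hi [hl hc]] hu]] _].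
by exists i0; split => // i' a b c; symmetry; apply: hu.
Qed.

Variables (i j : nat).
Hypotheses (hi : i < size F) (hj : j < size F) (li : is_lcusp F i) (lj : is_lcusp F j)
  (nij : i != j).

Lemma nboth P : P.1 <= size F -> P.2 < width F P.1 ->
  ~~ ((lab F rho i j P).1 && (lab F rho i j P).2).
Proof.
move=> h1 h2; apply/negP => /andP[/pbP ci /pbP cj].
have [i0 [_ _ _ hu]] := comp_ex h1 h2.
by move/eqP: nij; rewrite (hu i) // (hu j).
Qed.

Lemma iota_split2 k n : iota 0 (k + n) = iota 0 k ++ iota k n.
Proof. by rewrite iotaD. Qed.

Lemma iota_split3 k n : iota 0 (k + (2 + n)) = iota 0 k ++ [:: k; k.+1] ++ iota (2 + k) n.
Proof. by rewrite iotaD iotaD /= add0n addnC. Qed.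

Lemma swap_par A B (x y : bool * bool) : ~~ (x.1 && x.2) -> ~~ (y.1 && y.2) ->
  odd (invc (A ++ y :: x :: B)) = odd (invc (A ++ x :: y :: B)) (+) ((x.1 && y.2) || (x.2 && y.1)).
Proof.
move=> hx hy; have := invc_swap A B x y.
move/(congr1 odd); rewrite !oddD.
move: hx hy; case: x => [[] []]; case: y => [[] []] //= _ _;
  by case: (odd _); case: (odd _).
Qed.

Lemma parity_step t : t < size F ->
  odd (invc (Lsq F rho i j t.+1)) = odd (invc (Lsq F rho i j t)) (+) crossing_between F rho i j t.
Proof.
move=> ht.
have hv := vf.1 t ht.
rewrite /Lsq widthS //.
set w := width F t.
have hcb : ~~ is_crossing F t -> crossing_between F rho i j t = false.
  by rewrite /crossing_between => /negbTE ->.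
case E: (ev F t) => [k|k|k] in hv *.
-
  rewrite hcb ?/is_crossing ?E // addbF.
  set x := lab F rho i j (t.+1, k).
  have hx : lab F rho i j (t.+1, k.+1) = x.
    apply/esym/lab_conn/rst_step; right; exists t, k; split => //; by left.
  change (step w (LC k)) with w.+2.
  rewrite (_ : w.+2 = k + (2 + (w - k))); last by lia.
  rewrite [in RHS](_ : w = k + (w - k)); last by lia.
  rewrite iota_split3 iota_split2 !map_cat /= -/x hx.
  have -> : [seq lab F rho i j (t.+1, p) | p <- iota 0 k] = [seq lab F rho i j (t, p) | p <- iota 0 k].
    apply/eq_in_map => p; rewrite mem_iota /= => hp.
    by apply: lab_step => //; [lia | rewrite /next_pos E hp].
  have -> : [seq lab F rho i j (t.+1, p) | p <- iota (2 + k) (w - k)] =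
            [seq lab F rho i j (t, p) | p <- iota k (w - k)].
    apply: map_iota_shift => p hp.
    apply: lab_step; [done|lia|].
    by rewrite /next_pos E; case: ifP => //; lia.
  apply: invc_ins.
  apply: nboth => /=; first lia.
  rewrite widthS // E /=; lia.
-
  rewrite hcb ?/is_crossing ?E // addbF.
  set x := lab F rho i j (t, k).
  have hx : lab F rho i j (t, k.+1) = x.
    apply/esym/lab_conn/rst_step; right; exists t, k; split => //; by right.
  change (step w (RC k)) with w.-2.
  rewrite (_ : w.-2 = k + (w - k.+2)); last by lia.
  rewrite [in RHS](_ : w = k + (2 + (w - k.+2))); last by lia.
  rewrite iota_split3 iota_split2 !map_cat /= -/x hx.
  have -> : [seq lab F rho i j (t.+1, p) | p <- iota 0 k] = [seq lab F rho i j (t, p) | p <- iota 0 k].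
    apply/eq_in_map => p; rewrite mem_iota /= => hp.
    by apply: lab_step => //; [lia | rewrite /next_pos E hp].
  have -> : [seq lab F rho i j (t, p) | p <- iota (2 + k) (w - k.+2)] =
            [seq lab F rho i j (t.+1, p) | p <- iota k (w - k.+2)].
    apply: map_iota_shift => p hp.
    symmetry; apply: lab_step; [done|lia|].
    rewrite /next_pos E; case: ifP; first lia; case: ifP => //; first lia.
    by move=> *; congr Some; lia.
  symmetry; apply: invc_ins.
  by apply: nboth => /=; lia.
-
  change (step w (X k)) with w.
  case R: (rho t).
  + rewrite /crossing_between R andbF addbF.
    congr (odd (invc _)).
    rewrite -[iota 0 w]/(iota (0 + 0) w).
    apply: map_iota_shift => p hp.
    by apply: lab_step; [done|lia|rewrite /next_pos E R].
  + rewrite /crossing_between /is_crossing /xpos E R /= pb_orand.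
    set x := lab F rho i j (t, k); set y := lab F rho i j (t, k.+1).
    have hx : ~~ (x.1 && x.2) by apply: nboth => /=; lia.
    have hy : ~~ (y.1 && y.2) by apply: nboth => /=; lia.
    rewrite (_ : w = k + (2 + (w - k.+2))); last by lia.
    rewrite iota_split3 !map_cat /=.
    have -> : lab F rho i j (t.+1, k) = y.
      by apply: lab_step; [done|lia|rewrite /next_pos E R /= eqn_leq ltnn /= eqxx].
    have -> : lab F rho i j (t.+1, k.+1) = x.
      by apply: lab_step; [done|lia|rewrite /next_pos E R /= eqxx].
    have -> : [seq lab F rho i j (t.+1, p) | p <- iota 0 k] = [seq lab F rho i j (t, p) | p <- iota 0 k].
      apply/eq_in_map => p; rewrite mem_iota /= => hp.
      apply: lab_step; [done|lia|rewrite /next_pos E R /=].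
      by case: eqP => [?|_]; [lia|case: eqP => [?|_] //; lia].
    have -> : [seq lab F rho i j (t.+1, p) | p <- iota (2 + k) (w - k.+2)] =
              [seq lab F rho i j (t, p) | p <- iota (2 + k) (w - k.+2)].
      apply/eq_in_map => p; rewrite mem_iota /= => hp.
      apply: lab_step; [done|lia|rewrite /next_pos E R /=].
      by case: eqP => [?|_]; [lia|case: eqP => [?|_] //; lia].
    exact: swap_par.
Qed.
Lemma parity_all T : T <= size F ->
  odd (invc (Lsq F rho i j T)) = odd (\sum_(0 <= t < T) crossing_between F rho i j t).
Proof.
elim: T => [|T IH] hT; first by rewrite /Lsq width0 big_geq.
rewrite parity_step // big_nat_recr //= oddD IH //.
  by case: crossing_between. exact: ltnW.
Qed.

Lemma cb_even : ~~ odd (\sum_(0 <= t < size F) crossing_between F rho i j t).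
Proof. by rewrite -parity_all // /Lsq vf.2. Qed.

Local Open Scope ring_scope.

Lemma S_even (orho : point -> bool) :
  (2 %| \sum_(t < size F | crossing_between F rho i j t) xsign orho t (xpos F t))%Z.
Proof.
have -> : \sum_(t < size F | crossing_between F rho i j t) xsign orho t (xpos F t) =
  \sum_(t < size F | crossing_between F rho i j t) (xsign orho t (xpos F t) - 1) +
  \sum_(t < size F | crossing_between F rho i j t) 1.
  by rewrite -big_split /=; apply: eq_bigr => t _; rewrite subrK.
apply: rpredD.
  apply: (big_ind (fun x : int => (2 %| x)%Z)); [exact: dvdz0 | exact: rpredD|].
  by move=> t _; rewrite /xsign; case: ifP.
have -> : \sum_(t < size F | crossing_between F rho i j t) (1 : int) =
   ((\sum_(0 <= t < size F) crossing_between F rho i j t)%N)%:R.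
  rewrite natr_sum big_mkord big_mkcond /=; apply: eq_bigr => t _.
  by case: crossing_between.
rewrite natz.
have := cb_even; rewrite -dvdn2.
by [].
Qed.

End P3.



Lemma minmax (i j i0 j0 : nat) : i < j -> i0 != j0 ->
  ((i == i0) && (j == j0)) || ((i == j0) && (j == i0)) = (i == minn i0 j0) && (j == maxn i0 j0).
Proof.
move=> h /eqP n.
case: (i =P i0) => a; case: (j =P j0) => b; case: (i =P j0) => c; case: (j =P i0) => d;
case: (i =P minn i0 j0) => e; case: (j =P maxn i0 j0) => f => //=; exfalso; lia.
Qed.

Section P4.
Variables (F : front) (rho : pred nat).
Hypothesis vf : valid_front F.
Hypothesis nr : normal_ruling F rho.

Lemma pair_count t : t < size F ->
  (\sum_(i < size F | is_lcusp F i) \sum_(j < size F | is_lcusp F j && (i < j)%N)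
     (crossing_between F rho i j t : nat))%N = (is_crossing F t && ~~ rho t : nat).
Proof.
move=> ht.
case: (boolP (is_crossing F t && ~~ rho t)) => hc; last first.
  rewrite big1 // => i _; rewrite big1 // => j _.
  by move: hc; rewrite /crossing_between; case: (is_crossing F t); case: (rho t).
case/andP: hc => hx hr.
have hk : (xpos F t).+1 < width F t.
  move: hx (vf.1 t ht); rewrite /is_crossing /xpos; by case: (ev F t).
have [i0 [hi0 li0 ci0 ui0]] := comp_ex nr (P := (t, xpos F t)) (ltnW ht) (ltnW hk).
have [j0 [hj0 lj0 cj0 uj0]] := comp_ex nr (P := (t, (xpos F t).+1)) (ltnW ht) hk.
have nij : i0 != j0.
  apply/eqP => e; subst j0.
  apply: (nr.2.2.1 t ht hx hr).
  exact: conn_trans ci0 (conn_sym cj0).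
have key : forall i j : 'I_(size F), is_lcusp F i -> is_lcusp F j && (i < j)%N ->
   crossing_between F rho i j t = ((i : nat) == minn i0 j0) && ((j : nat) == maxn i0 j0).
  move=> i j li /andP[lj hij].
  have eqi : forall l : 'I_(size F), is_lcusp F l -> forall l0 P,
      connected F rho P (lcusp_pt F l0) ->
      (forall i', i' < size F -> is_lcusp F i' -> connected F rho P (lcusp_pt F i') -> i' = l0) ->
      pb (connected F rho P (lcusp_pt F l)) = (l == l0 :> nat).
    move=> l ll l0 P c0 u0; apply/pbP/eqP => [c|->] //.
    exact: u0.
  rewrite /crossing_between hx hr /= pb_orand.
  rewrite (eqi i li i0 _ ci0 ui0) (eqi j lj j0 _ cj0 uj0).
  rewrite (eqi j lj i0 _ ci0 ui0) (eqi i li j0 _ cj0 uj0).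
  rewrite [X in _ || X]andbC; exact: minmax.
have hm : minn i0 j0 < size F by rewrite gtn_min hi0.
have hM : maxn i0 j0 < size F by rewrite gtn_max hi0 hj0.
have lm : is_lcusp F (minn i0 j0) by rewrite /minn; case: ifP.
have lM : is_lcusp F (maxn i0 j0) by rewrite /maxn; case: ifP.
have hmM : minn i0 j0 < maxn i0 j0.
  move/eqP: nij => nij; lia.
rewrite (eq_bigr (fun i : 'I_(size F) => \sum_(j < size F | is_lcusp F j && (i < j)%N)
    (((i : nat) == minn i0 j0) && ((j : nat) == maxn i0 j0) : nat))); last first.
  by move=> i li; apply: eq_bigr => j hj; rewrite key.
rewrite (bigD1 (Ordinal hm)) //= [X in _ + X]big1 ?addn0; last first.
  move=> i /andP[_ ni]; rewrite big1 // => j _.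
  by case: eqP => // e; move: ni; rewrite -(inj_eq val_inj) /= e eqxx.
rewrite (bigD1 (Ordinal hM)) /=; last by rewrite lM hmM.
rewrite !eqxx big1 // => j /andP[_ nj].
by case: eqP => // e; move: nj; rewrite -(inj_eq val_inj) /= e eqxx.
Qed.


End P4.


Local Open Scope ring_scope.

Lemma PoszS n (P : pred 'I_n) :
  Posz (\sum_(t < n | P t) 1)%N = \sum_(t < n | P t) (1 : int).
Proof. by rewrite -natz natr_sum. Qed.

Definition Wr (F : front) (rho : pred nat) (orho : point -> bool) : int :=
  \sum_(t < size F | is_crossing F t && ~~ rho t) xsign orho t (xpos F t).

Lemma sum_if n (P : pred 'I_n) (f : 'I_n -> int) :
  \sum_(t < n | P t) f t = \sum_(t < n) (if P t then f t else 0).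
Proof. exact: big_mkcond. Qed.

Lemma algA F rho o orho : normal_ruling F rho ->
  tb F o + chi F rho + 2 * e2 F rho o orho = Wr F rho orho.
Proof.
move=> nr.
rewrite /tb /chi /e2 /writhe /nswitches /nswitches_neg /fplus /fminus /Wr !PoszS.
rewrite (@sum_if (size F) (fun t : 'I_(size F) => is_crossing F t)).
rewrite (@sum_if (size F) (fun t : 'I_(size F) => rho t)).
rewrite (@sum_if (size F) (fun t : 'I_(size F) => rho t && (xsign o t (xpos F t) == -1))).
rewrite (@sum_if (size F) (fun t : 'I_(size F) => flipped F rho o orho t && (xsign orho t (xpos F t) == 1))).
rewrite (@sum_if (size F) (fun t : 'I_(size F) => flipped F rho o orho t && (xsign orho t (xpos F t) == -1))).
rewrite (@sum_if (size F) (fun t : 'I_(size F) => is_crossing F t && ~~ rho t)).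
have key : \sum_(t < size F) ((if is_crossing F t then xsign o t (xpos F t) else 0)
   - (if rho t then 1 else 0)
   + 2 * (if rho t && (xsign o t (xpos F t) == -1) then 1 else 0)
   + 2 * (if flipped F rho o orho t && (xsign orho t (xpos F t) == 1) then 1 else 0)
   - 2 * (if flipped F rho o orho t && (xsign orho t (xpos F t) == -1) then 1 else 0)) =
   \sum_(t < size F) (if is_crossing F t && ~~ rho t then xsign orho t (xpos F t) else 0).
  apply: eq_bigr => t _.
  have hr : rho t -> is_crossing F t by move=> h; case: (nr.1 t h).
  move: hr; rewrite /flipped /xsign.
  case: (is_crossing F t); case: (rho t) => //= hr; try by [have := hr isT];
  case: (o (t : nat, xpos F t) == o (t : nat, (xpos F t).+1)); case: (orho (t : nat, xpos F t) == orho (t : nat, (xpos F t).+1)) => //.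
rewrite !sumrB !big_split /= -!mulr_sumr in key.
rewrite -key sumrN; ring.
Qed.

Lemma W_eq F rho orho : valid_front F -> normal_ruling F rho ->
  Wr F rho orho = 2 * rlk F rho orho.
Proof.
move=> vf nr.
rewrite /rlk mulr_sumr.
have e1 : forall i : 'I_(size F), is_lcusp F i ->
   2 * \sum_(j < size F | is_lcusp F j && (i < j)%N) lk F rho orho i j =
   \sum_(j < size F | is_lcusp F j && (i < j)%N)
      \sum_(t < size F) (xsign orho t (xpos F t) * (crossing_between F rho i j t)%:R).
  move=> i li; rewrite mulr_sumr; apply: eq_bigr => j /andP[lj hij].
  rewrite /lk mulrC divzK; last first.
    apply: S_even => //; by rewrite neq_ltn hij.
  rewrite big_mkcond; apply: eq_bigr => t _.
  by case: crossing_between; rewrite ?mulr1 ?mulr0.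
rewrite (eq_bigr _ e1).
under eq_bigr => i li do rewrite exchange_big.
rewrite exchange_big /Wr big_mkcond; apply: eq_bigr => t _.
under eq_bigr => i li do rewrite -mulr_sumr.
rewrite -mulr_sumr.
under eq_bigr => i li do rewrite -natr_sum.
rewrite -natr_sum pair_count //.
by case: (_ && _); rewrite ?mulr1 ?mulr0.
Qed.

Unset Implicit Arguments.
Theorem lemma3p10 (F : front) (rho : pred nat) (o orho : point -> bool) :
  valid_front F ->
  normal_ruling F rho ->
  is_orientation F pred0 o ->
  is_orientation F rho orho ->
  (2 %| tb F o + chi F rho + 2 * e2 F rho o orho)%Z /\
  (rlk F rho orho = divz (tb F o + chi F rho + 2 * e2 F rho o orho) 2 %[mod 2])%Z.
Proof.
move=> vf nr _ _.
rewrite algA // W_eq //.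
split; first by apply: dvdz_mulr; exact: dvdzz.
by rewrite mulKz.
Qed.
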